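(* Let $(\alpha_n)_{n\ge0}$ be a sequence of positive numbers and $\rho>1$. Let $(Y_n)_{n\ge1}$ be i.i.d. with $\mathbb{P}(Y_1<0)>0$ and $\mathbb{P}(Y_1\ge x)\precsim(\log x)^{-\alpha}$ as $x\to\infty$ for some $\alpha>1$. Let $X_n:=\sum_{k=1}^n\rho^{n-k}\alpha_{n-k}Y_k$. (1) If $(\alpha_n)$ is nondecreasing, there is a constant $c>0$ such that $\mathbb{P}\big(\bigcap_{n=1}^\infty\{X_n\le-c\,\alpha_{n-1}\rho^{n-1}\}\big)>0$. (2) If $0<l\le\alpha_n\le u<\infty$ for all $n\ge0$, there is a constant $c>0$ such that $\mathbb{P}\big(\bigcap_{n=1}^\infty\{X_n\le-c\,\rho^{n-1}\}\big)>0$.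
   Context: $f\precsim g$ as $x\to\infty$ means $\limsup_{x\to\infty}f(x)/g(x)<\infty$. *)

(* Defs.v *)
From HB Require Import structures.
From mathcomp Require Import all_boot all_order all_algebra.
From mathcomp Require Import all_classical all_reals all_analysis.
Set Implicit Arguments. Unset Strict Implicit. Unset Printing Implicit Defensive.
Import Order.TTheory GRing.Theory Num.Theory.
Local Open Scope classical_set_scope.
Local Open Scope ring_scope.

Definition mutually_independent {d} {T : measurableType d} {R : realType}
  (P : probability T R) (Y : nat -> {RV P >-> R}) : Prop :=
  forall (I : seq nat) (B : nat -> set R),
    uniq I -> (forall i, i \in I -> measurable (B i)) ->
    P (\bigcap_(i in [set i | i \in I]) (Y i @^-1` B i))
    = (\prod_(i <- I) P (Y i @^-1` B i))%E.

Definition identically_distributed {d} {T : measurableType d} {R : realType}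
  (P : probability T R) (Y : nat -> {RV P >-> R}) : Prop :=
  forall n (B : set R), measurable B -> P (Y n @^-1` B) = P (Y 0%N @^-1` B).

Definition iid {d} {T : measurableType d} {R : realType}
  (P : probability T R) (Y : nat -> {RV P >-> R}) : Prop :=
  mutually_independent Y /\ identically_distributed Y.

Definition Xseq {d} {T : measurableType d} {R : realType} (P : probability T R)
  (alpha : nat -> R) (rho : R) (Y : nat -> {RV P >-> R}) (n : nat) (t : T) : R :=
  \sum_(1 <= k < n.+1) rho ^+ (n - k) * alpha (n - k)%N * Y k t.

(* Main.v *)
Require Import Defs.
From HB Require Import structures.
From mathcomp Require Import all_boot all_order all_algebra.
From mathcomp Require Import all_classical all_reals all_analysis.
From mathcomp Require Import measurable_realfun.
From mathcomp Require Import ring lra.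
Import Order.TTheory GRing.Theory Num.Theory.
Local Open Scope classical_set_scope.
Local Open Scope ring_scope.

Lemma geom_near (R : realType) (r eps : R) : 0 <= r < 1 -> 0 < eps ->
  \forall n \near \oo, r ^+ n <= eps.
Proof.
move=> /andP[r0 r1] e0.
have h : `|r| < 1 by rewrite ger0_norm.
have H : \forall n \near \oo, `|r ^+ n| < eps := cvgr0_norm_lt _ (cvg_expr h) _ e0.
near=> n.
have /ltW : `|r ^+ n| < eps by near: n; exact: H.
by rewrite ger0_norm // exprn_ge0.
Unshelve. all: end_near.
Qed.

Lemma weier (R : realType) (c : nat -> R) (m k : nat) :
  (forall i, 0 <= c i <= 1) ->
  (0 <= \prod_(m <= i < m + k) c i <= 1) /\
  1 - \sum_(m <= i < m + k) (1 - c i) <= \prod_(m <= i < m + k) c i.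
Proof.
move=> hc; elim: k => [|k [/andP[p0 p1] IH]].
  by rewrite addn0 !big_geq // subr0 ler01 lexx.
rewrite addnS !big_nat_recr /= ?leq_addr //.
have /andP[c0 c1] := hc (m + k)%N.
set P := \prod_(m <= i < m + k) c i in p0 p1 IH *.
set S := \sum_(m <= i < m + k) (1 - c i) in IH *.
split; first by apply/andP; split; nra.
nra.
Qed.

Lemma prod_split_bound (R : realType) (c : nat -> R) (m n : nat) :
  (forall i, 0 <= c i <= 1) ->
  \prod_(i < m) c i * (1 - \sum_(m <= i < n) (1 - c i)) <= \prod_(i < n) c i.
Proof.
move=> hc.
have pm0 : forall k, 0 <= \prod_(i < k) c i.
  by move=> k; apply: prodr_ge0 => i _; have /andP[] := hc i.
case: (leqP m n) => mn.
  rewrite -!(big_mkord xpredT) (big_cat_nat (leq0n m) mn) /=.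
  have := @weier _ c m (n - m) hc; rewrite subnKC //; case=> _ h.
  by apply: ler_wpM2l => //; rewrite big_mkord.
rewrite big_geq ?(ltnW mn) // subr0 mulr1.
rewrite -!(big_mkord xpredT) (big_cat_nat (leq0n n) (ltnW mn)) /=.
have := @weier _ c n (m - n) hc; rewrite subnKC ?(ltnW mn) //; case=> /andP[h0 h1] _.
rewrite -[leRHS]mulr1; apply: ler_wpM2l => //.
by rewrite big_mkord.
Qed.

Lemma decay_step (R : realType) (b : R) (k : nat) : 0 < b -> (2 <= k)%N ->
  expR (-(b+1) * ln (k%:R : R)) <=
  (expR (-b * ln (k.-1%:R : R)) - expR (-b * ln (k%:R : R))) / b.
Proof.
move=> b0 k2.
have k0 : (0 : R) < k%:R by rewrite ltr0n; case: k k2.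
have k10 : (0 : R) < k.-1%:R by rewrite ltr0n; case: k k2 {k0} => [|[]].
set u := ln (k.-1%:R : R); set v := ln (k%:R : R).
have kp : (0 < k)%N by apply: leq_trans k2.
have km : (k%:R : R) = k.-1%:R + 1 by rewrite natr1 prednK.
have D : u - v <= - k%:R^-1.
  rewrite /u /v -ln_div ?posrE //.
  have -> : (k.-1%:R : R) / k%:R = 1 + - k%:R^-1.
    have km' : (k.-1%:R:R) = k%:R - 1 by rewrite km addrK.
    by rewrite km' mulrBl divff ?mul1r // lt0r_neq0.
  apply: le_ln1Dx.
  rewrite ltrN2 invf_lt1 // ltr1n; by case: k k2 {k0 k10 u v km kp}.
have E0 : 0 < expR (-b * v) := expR_gt0 _.
have X : expR (-b * v) * (1 + b * (v - u)) <= expR (-b * u).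
  have -> : -b * u = -b * v + b * (v - u) by ring.
  rewrite expRD; apply: ler_wpM2l; [exact: ltW|exact: expR_ge1Dx].
have L : expR (-(b+1) * v) = expR (-b * v) * k%:R^-1.
  rewrite (_ : -(b+1) * v = -b * v + - v); last by ring.
  by rewrite expRD expRN /v lnK.
rewrite L ler_pdivlMr //.
set E := expR (-b * v) in E0 X L *.
set ki := k%:R^-1 in D L *.
have H : 0 <= E * b * ((v - u) - ki).
  by apply: mulr_ge0; [apply: mulr_ge0; exact: ltW| lra].
nra.
Qed.

Lemma decay_sum (R : realType) (b : R) (K n : nat) : 0 < b -> (2 <= K)%N ->
  \sum_(K <= k < n) expR (-(b+1) * ln (k%:R : R)) <= expR (-b * ln (K.-1%:R : R)) / b.
Proof.
move=> b0 K2.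
have H : forall j, \sum_(K <= k < K + j) expR (-(b+1) * ln (k%:R : R)) <=
   (expR (-b * ln (K.-1%:R : R)) - expR (-b * ln ((K + j).-1%:R : R))) / b.
  elim=> [|j IH]; first by rewrite addn0 big_geq // subrr mul0r.
  rewrite addnS big_nat_recr ?leq_addr //=.
  have := @decay_step R b (K + j) b0 (leq_trans K2 (leq_addr j K)).
  move: IH; rewrite !mulrBl => IH1 IH2.
  lra.
case: (leqP n K) => nK.
  by rewrite big_geq // divr_ge0 // ?expR_ge0 // ltW.
have := H (n - K)%N; rewrite subnKC ?(ltnW nK) // => h.
apply: (le_trans h); rewrite ler_pM2r ?invr_gt0 //.
by rewrite gerBl expR_ge0.
Qed.

Lemma near_ge (N : nat) : \forall n \near \oo, (N <= n)%N.
Proof. by exists N. Qed.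

Lemma tail_sum (R : realType) (a Cabs L eps : R) : 1 < a -> 0 <= Cabs -> 0 < L -> 0 < eps ->
  \forall K \near \oo, (2 <= K)%N /\
   forall n, \sum_(K <= i < n) Cabs * expR (-a * ln (L *+ i)) <= eps.
Proof.
move=> a1 C0 L0 e0.
set b := a - 1.
have b0 : 0 < b by rewrite /b subr_gt0.
set A := expR (-a * ln L).
have A0 : 0 < A := expR_gt0 _.
set e' := eps * b / (Cabs * A + 1).
have e'0 : 0 < e' by rewrite /e' divr_gt0 ?mulr_gt0 //; nra.
near=> K.
have K2 : (2 <= K)%N by near: K; exact: near_ge.
have Kr : expR (- ln e' / b) + 1 <= K%:R by near: K; exact: nbhs_infty_ger.
split => // n.
have km : (K%:R : R) = K.-1%:R + 1 by rewrite natr1 prednK // (leq_trans _ K2).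
have K1pos : (0 : R) < K.-1%:R by rewrite ltr0n; case: (K) K2 => [|[]].
have sm : expR (-b * ln (K.-1%:R : R)) <= e'.
  rewrite -[e' in leRHS]lnK ?posrE // ler_expR.
  have : - ln e' / b <= ln (K.-1%:R : R).
    rewrite -[X in X <= _]expRK ler_ln ?posrE ?expR_gt0 //; lra.
  rewrite ler_pdivrMr // => h; nra.
have eq : \sum_(K <= i < n) Cabs * expR (-a * ln (L *+ i)) =
          Cabs * A * \sum_(K <= i < n) expR (-(b+1) * ln (i%:R : R)).
  rewrite big_distrr /=; apply: eq_big_nat => i /andP[Ki _].
  have ip : (0 : R) < i%:R by rewrite ltr0n (leq_trans _ Ki) // (leq_trans _ K2).
  rewrite (_ : L *+ i = L * i%:R); last by rewrite mulr_natr.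
  rewrite lnM ?posrE // mulrDr expRD /A /b.
  rewrite (_ : - (a - 1 + 1) = - a); last by ring.
  by rewrite mulrA.
rewrite eq.
have := @decay_sum R b K n b0 K2.
move=> h.
have h2 : Cabs * A * \sum_(K <= i < n) expR (- (b + 1) * ln (i%:R : R)) <=
   Cabs * A * (e' / b).
  apply: ler_wpM2l; first by apply: mulr_ge0 => //; exact: ltW.
  apply: (le_trans h); rewrite ler_pM2r ?invr_gt0 //.
apply: (le_trans h2).
have CA0 : 0 <= Cabs * A by apply: mulr_ge0 => //; exact: ltW.
rewrite /e' (_ : Cabs * A * (eps * b / (Cabs * A + 1) / b) =
   eps * (Cabs * A / (Cabs * A + 1))); last first.
  field; apply/andP; split; apply: lt0r_neq0 => //; lra.
apply: ler_piMr; first exact: ltW.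
rewrite ler_pdivrMr; lra.
Unshelve. all: end_near.
Qed.

Set Implicit Arguments. Unset Strict Implicit. Unset Printing Implicit Defensive.

Definition gf (R : realType) (K : nat) (r : R) (i : nat) : R := if (K <= i)%N then r ^+ i else 0.

Lemma gf_sum (R : realType) (K m n : nat) (r : R) : 0 <= r < 1 ->
  \sum_(m <= i < n) gf K r i <= (r ^+ K - r ^+ (maxn n K)) / (1 - r).
Proof.
move=> /andP[r0 r1].
have r1' : 0 < 1 - r by lra.
have mono : forall a b, (a <= b)%N -> r ^+ b <= r ^+ a.
  by move=> a b ab; rewrite -(subnKC ab) exprD ler_piMr ?exprn_ge0 ?exprn_ile1 // ltW.
elim: n => [|n IH].
  rewrite big_geq // max0n subrr mul0r //.
case: (leqP m n) => mn; last first.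
  rewrite big_geq //; apply: divr_ge0; last exact: ltW.
  by rewrite subr_ge0 mono // leq_maxr.
rewrite big_nat_recr //= /gf.
case: (leqP K n) => Kn.
  rewrite (maxn_idPl (leq_trans Kn (leqnSn n))).
  move: IH; rewrite /gf (maxn_idPl Kn) => IH.
  rewrite exprS.
  have e : (r ^+ K - r ^+ n) / (1 - r) + r ^+ n = (r ^+ K - r * r ^+ n) / (1 - r).
    by field; lra.
  by rewrite -e lerD2r.
rewrite addr0 (maxn_idPr Kn).
by move: IH; rewrite /gf (maxn_idPr (ltnW Kn)).
Qed.

Lemma gf_sum_le (R : realType) (K m n : nat) (r : R) : 0 <= r < 1 ->
  \sum_(m <= i < n) gf K r i <= r ^+ K / (1 - r).
Proof.
move=> /andP[r0 r1]; apply: (le_trans (gf_sum _ _ _ _)); first by rewrite r0.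
rewrite ler_pM2r ?invr_gt0 ?subr_gt0 // gerBl exprn_ge0 //.
Qed.

Lemma det (R : realType) (alpha : nat -> R) (rho W eta r : R) (y : nat -> R) (K n : nat) :
  0 <= W ->
  (forall k, (2 <= k <= n.+1)%N ->
     rho ^+ (n.+1 - k) * alpha (n.+1 - k)%N * y k <= W * rho ^+ n * gf K r k.-1) ->
  (0 <= rho) ->
  \sum_(1 <= i < n.+1) gf K r i <= eta ->
  \sum_(1 <= k < n.+2) rho ^+ (n.+1 - k) * alpha (n.+1 - k)%N * y k <=
  rho ^+ n * alpha n * y 1%N + W * rho ^+ n * eta.
Proof.
move=> W0 hk rho0 hs.
rewrite big_ltn // subSS subn0 lerD2l.
have -> : \sum_(2 <= k < n.+2) rho ^+ (n.+1 - k) * alpha (n.+1 - k)%N * y k =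
          \sum_(1 <= i < n.+1) rho ^+ (n - i) * alpha (n - i)%N * y i.+1.
  by rewrite -[2%N]/(1 + 1)%N big_addn /= subn1 /=; apply: eq_big_nat => i _; rewrite addn1.
apply: (le_trans (y := \sum_(1 <= i < n.+1) W * rho ^+ n * gf K r i)).
  apply: ler_sum_nat => i /andP[i1 i2].
  have h := hk i.+1; rewrite subSS /= in h; apply: h.
  by rewrite ltnS i1.
rewrite -big_distrr /= ler_wpM2l //.
by rewrite mulr_ge0 // exprn_ge0.
Qed.

Lemma fin_P d (T : measurableType d) (R : realType) (P : probability T R) (A : set T) :
  measurable A -> P A = (fine (P A))%:E.
Proof. by move=> mA; rewrite fineK // fin_num_measure. Qed.

Lemma fin_P01 d (T : measurableType d) (R : realType) (P : probability T R) (A : set T) :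
  measurable A -> 0 <= fine (P A) <= 1.
Proof.
move=> mA; rewrite fine_ge0 ?measure_ge0 //=.
have := probability_le1 P mA; rewrite (fin_P P mA) lee_fin //.
Qed.

Lemma pos_event d (T : measurableType d) (R : realType) (P : probability T R)
  (Y : nat -> {RV P >-> R}) (beta : nat -> R) (q : R) (m : nat) :
  iid (fun n => Y n.+1) -> 0 < q ->
  (forall i, q <= fine (P (Y 1%N @^-1` `]-oo, beta i]))) ->
  (forall n, 1/2 <= 1 - \sum_(m <= i < n) (1 - fine (P (Y 1%N @^-1` `]-oo, beta i])))) ->
  (0 < P (\bigcap_i (Y i.+1 @^-1` `]-oo, beta i])))%E.
Proof.
move=> [hind hid] q0 hq hs.
set c := fun i => fine (P (Y 1%N @^-1` `]-oo, beta i])).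
have mB : forall i, measurable (Y 1%N @^-1` `]-oo, beta i]).
  by move=> i; apply: measurable_funPTI; exact: measurable_itv.
have c01 : forall i, 0 <= c i <= 1 by move=> i; exact: fin_P01.
set F := fun n => \bigcap_(i in [set i | i \in iota 0 n]) (Y i.+1 @^-1` `]-oo, beta i]).
have PF : forall n, P (F n) = (\prod_(i < n) c i)%:E.
  move=> n; rewrite /F (hind (iota 0 n) (fun i => [set` `]-oo, beta i]])) ?iota_uniq //;
    try by move=> i _; exact: measurable_itv.
  rewrite -prodEFin.
  have -> : iota 0 n = index_iota 0 n by rewrite /index_iota subn0.
  rewrite big_mkord.
  apply: eq_bigr => i _; rewrite (hid i _ (measurable_itv _)) /=.
  exact: fin_P.
have bnd : forall n, q ^+ m * (1/2) <= \prod_(i < n) c i.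
  move=> n; apply: le_trans (@prod_split_bound R c m n c01).
  apply: ler_pM; first by rewrite exprn_ge0 // ltW.
  - lra.
  - have <- : \prod_(i < m) q = q ^+ m by rewrite prodr_const card_ord.
    by apply: ler_prod => i _; rewrite (ltW q0) hq.
  - exact: hs.
have mF : forall n, measurable (F n).
  move=> n; apply: bigcap_measurableType => i _.
  by apply: measurable_funPTI; exact: measurable_itv.
have -> : \bigcap_i (Y i.+1 @^-1` `]-oo, beta i]) = \bigcap_n F n.
  apply/seteqP; split => t ht.
    by move=> n _ i _; exact: ht.
  move=> i _.
  have hi : i \in iota 0 i.+1 by rewrite mem_iota add0n ltnSn.
  exact: (ht i.+1 I i hi).
have cv := @nonincreasing_cvg_mu _ _ _ P F.
have cv' : (P \o F) x @[x --> \oo] --> P (\bigcap_n F n).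
  apply: cv.
  - by apply: (le_lt_trans (probability_le1 P (mF 0%N))); rewrite ltry.
  - exact: mF.
  - exact: bigcapT_measurable.
  - move=> a b ab; apply/subsetPset => t Ft i /= ib; apply: Ft => /=.
    move: ib; rewrite !mem_iota !add0n => /andP[_ ib].
    exact: leq_trans ib ab.
rewrite -(cvg_lim (@ereal_hausdorff R) cv').
apply: (@lt_le_trans _ _ (q ^+ m * (1/2))%:E).
  by rewrite lte_fin mulr_gt0 ?exprn_gt0 //; lra.
apply: lime_ge.
  by apply/cvg_ex; eexists; exact: cv'.
apply: nearW => n /=; rewrite PF lee_fin; exact: bnd.
Qed.

Lemma delta_ex d (T : measurableType d) (R : realType) (P : probability T R)
  (Z : {RV P >-> R}) :
  (0 < P [set t | (Z t < 0)%R])%E ->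
  exists2 del : R, 0 < del & 0 < fine (P (Z @^-1` `]-oo, - del])).
Proof.
move=> hpos.
set A := fun m : nat => Z @^-1` `]-oo, - m.+1%:R^-1].
have mA : forall m, measurable (A m).
  by move=> m; apply: measurable_funPTI; exact: measurable_itv.
have [[m hm]|hno] := pselect (exists m, (0 < P (A m))%E).
  exists m.+1%:R^-1; first by rewrite invr_gt0 ltr0n.
  by move: hm; rewrite (fin_P P (mA m)) lte_fin.
exfalso.
have neg : forall m, P.-negligible (A m).
  move=> m; exists (A m); split => //.
  apply/eqP; rewrite eq_le measure_ge0 andbT leNgt; apply/negP => h.
  by apply: hno; exists m.
have [N [mN PN0 sub]] := negligible_bigcup neg.
have mY : measurable [set t | (Z t < 0)%R].
  have -> : [set t | (Z t < 0)%R] = Z @^-1` `]-oo, 0[.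
    by apply/seteqP; split => t /=; rewrite in_itv /=.
  by apply: measurable_funPTI; exact: measurable_itv.
have : (P [set t | (Z t < 0)%R] <= P N)%E.
  apply: le_measure; rewrite ?inE //.
  move=> t /= zt; apply: sub.
  have e0 : 0 < - Z t by rewrite oppr_gt0.
  have [M _ HM] := near_infty_natSinv_lt (PosNum e0).
  exists M => //; rewrite /A /= in_itv /=.
  have := HM M (leqnn M); rewrite /= => h; rewrite lerNr; exact: ltW.
by rewrite PN0 leNgt hpos.
Qed.

Lemma term_bound (R : realType) (rho s W A yv : R) (K i n : nat) :
  0 < rho -> 0 <= s -> (i <= n)%N -> 0 <= A <= W ->
  yv <= (if (K <= i)%N then s ^+ i else 0) ->
  rho ^+ (n - i) * A * yv <= W * rho ^+ n * gf K (s / rho) i.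
Proof.
move=> rho0 s0 inn /andP[A0 AW] hy.
have c0 : 0 <= rho ^+ (n - i) * A by rewrite mulr_ge0 // exprn_ge0 // ltW.
apply: (le_trans (ler_wpM2l c0 hy)).
rewrite /gf; case: (K <= i)%N; last by rewrite !mulr0.
have -> : W * rho ^+ n * (s / rho) ^+ i = rho ^+ (n - i) * W * s ^+ i.
  rewrite -{1}(subnK inn) exprD expr_div_n.
  have : rho ^+ i != 0 by rewrite expf_neq0 // gt_eqF.
  move=> h; field; exact: h.
rewrite ler_wpM2r ?exprn_ge0 // ler_wpM2l // exprn_ge0 // ltW //.
Qed.

Lemma meas_X d (T : measurableType d) (R : realType) (P : probability T R)
  (alpha : nat -> R) (rho : R) (Y : nat -> {RV P >-> R}) (n : nat) (c : R) :
  measurable [set t | Xseq alpha rho Y n t <= c].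
Proof.
have mf : measurable_fun setT (Xseq alpha rho Y n).
  rewrite /Xseq; apply: measurable_sum => k.
  apply: measurableT_comp; [exact: mulrl_measurable|exact: measurable_funPT].
have -> : [set t | Xseq alpha rho Y n t <= c] = setT `&` (Xseq alpha rho Y n @^-1` `]-oo, c]).
  apply/seteqP; split => t /=.
  - by move=> h; split => //; rewrite /= in_itv /=.
  - by case=> _; rewrite /= in_itv /=.
by apply: mf => //; exact: measurable_itv.
Qed.

Lemma key d (T : measurableType d) (R : realType) (P : probability T R)
  (rho : R) (Y : nat -> {RV P >-> R}) :
  1 < rho -> iid (fun n => Y n.+1) -> (0 < P [set t | (Y 1%N t < 0)%R])%E ->
  (exists a : R, 1 < a /\ exists C : R,
     \forall x \near +oo, (P [set t | (x <= Y 1%N t)%R] <= (C * (ln x) `^ (- a))%:E)%E) ->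
  exists2 del : R, 0 < del & forall eta : R, 0 < eta -> exists K : nat, exists s : R,
    [/\ 0 <= s, (forall n, \sum_(1 <= i < n) gf K (s / rho) i <= eta) &
     (0 < P (\bigcap_i (Y i.+1 @^-1`
        `]-oo, (if i == 0%N then - del else if (K <= i)%N then s ^+ i else 0)%R])))%E].
Proof.
move=> rho1 hiid hneg [a [a1 [C [M [Mreal HM]]]]].
have [del del0 qpos] := delta_ex hneg.
exists del => // eta eta0.
set q := fine (P (Y 1%N @^-1` `]-oo, - del])) in qpos.
set s := (1 + rho) / 2.
have s1 : 1 < s by rewrite /s; lra.
have srho : s < rho by rewrite /s; lra.
have rho0 : 0 < rho by lra.
set r := s / rho.
have r01 : 0 <= r < 1.
  rewrite /r divr_ge0 ?ltW //= ?ltr_pdivrMr //; try lra.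
set L := ln s.
have L0 : 0 < L by exact: ln_gt0.
have si01 : 0 <= s^-1 < 1 by rewrite invr_ge0 invf_lt1 //; lra.
have M1 : 0 < `|M| + 1 by rewrite ltr_pwDr ?normr_ge0.
have r1' : 0 < eta * (1 - r) by rewrite mulr_gt0 //; case/andP: r01 => _; lra.
have : \forall K \near \oo, ((2 <= K)%N /\
     forall n, \sum_(K <= i < n) `|C| * expR (-a * ln (L *+ i)) <= 1/2) /\
   (r ^+ K <= eta * (1 - r) /\ s^-1 ^+ K <= (`|M| + 1)^-1).
  near=> K; split; [|split].
  - near: K; apply: tail_sum => //; lra.
  - near: K; exact: geom_near.
  - near: K; apply: geom_near => //; rewrite invr_gt0.
case=> K0 _ /(_ K0 (leqnn K0)) [[K2 htail] [hgeo hM]].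
set K := K0 in K2 htail hgeo hM.
set beta := fun i => (if i == 0%N then - del else if (K <= i)%N then s ^+ i else 0).
exists K, s; split.
- rewrite /s; lra.
- move=> n; apply: le_trans (gf_sum_le K 1 n r01) _.
  by rewrite ler_pdivrMr //; case/andP: r01 => _; lra.
have mY : forall x : R, measurable (Y 1%N @^-1` `]-oo, x]).
  by move=> x; apply: measurable_funPTI; exact: measurable_itv.
apply: (@pos_event _ _ _ P Y beta q K hiid qpos).
- move=> i; rewrite /q; apply: fine_le; rewrite ?fin_num_measure //.
  apply: le_measure; rewrite ?inE //.
  move=> t /=; rewrite !in_itv /= => h; apply: (le_trans h).
  rewrite /beta; case: (i == 0%N) => //; case: (K <= i)%N.
    by rewrite (le_trans _ (exprn_ge0 _ _)) ?oppr_le0 ?ltW // /s; lra.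
  by rewrite oppr_le0 ltW.
move=> n.
have hsK : `|M| + 1 <= s ^+ K.
  move: hM; rewrite exprVn lef_pV2 ?posrE // exprn_gt0 //; lra.
suff h : \sum_(K <= i < n) (1 - fine (P (Y 1%N @^-1` `]-oo, beta i]))) <=
     \sum_(K <= i < n) `|C| * expR (-a * ln (L *+ i)).
  have := htail n; lra.
apply: ler_sum_nat => i /andP[Ki _].
have i0 : (0 < i)%N by apply: leq_trans Ki; apply: leq_trans K2.
have hb : beta i = s ^+ i by rewrite /beta (negbTE (lt0n_neq0 i0)) Ki.
rewrite hb.
set A := Y 1%N @^-1` `]-oo, s ^+ i].
set B := [set t | (s ^+ i <= Y 1%N t)%R].
have mA : measurable A := mY _.
have mB : measurable B.
  have -> : B = Y 1%N @^-1` `[s ^+ i, +oo[.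
    by apply/seteqP; split => t /=; rewrite in_itv /= andbT.
  by apply: measurable_funPTI; exact: measurable_itv.
have eC : 1 - fine (P A) = fine (P (~` A)).
  rewrite probability_setC //.
  have E : P A = (fine (P A))%:E := fin_P P mA.
  by rewrite [in RHS]E.
rewrite eC.
have hMs : M < s ^+ i.
  apply: (lt_le_trans _ (le_trans hsK _)).
    rewrite (le_lt_trans (ler_norm M)) // ltrDl //.
  by apply: ler_weXn2l => //; exact: ltW.
have hPB := HM _ hMs.
have le1 : fine (P (~` A)) <= fine (P B).
  apply: fine_le; rewrite ?fin_num_measure //; first exact: measurableC.
  apply: le_measure; rewrite ?inE //; first exact: measurableC.
  move=> t; rewrite /A /B /= in_itv /= => /negP; rewrite -ltNge; exact: ltW.
apply: (le_trans le1).
move: hPB; rewrite (fin_P P mB) lee_fin => hPB.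
apply: (le_trans hPB).
have Li : 0 < L *+ i by rewrite pmulrn_rgt0.
rewrite lnXn; last by rewrite /s; lra.
rewrite /powR gt_eqF //.
by apply: ler_wpM2r; [exact: expR_ge0|exact: ler_norm].
Unshelve. all: end_near.
Qed.

Theorem mainTheorem20 (d : measure_display) (T : measurableType d)
  (R : realType) (P : probability T R)
  (alpha : nat -> R) (rho : R) (Y : nat -> {RV P >-> R}) :
  (forall n, 0 < alpha n) ->
  1 < rho ->
  (* (Y_n)_{n >= 1} is i.i.d. *)
  iid (fun n => Y n.+1) ->
  (0 < P [set t | (Y 1%N t < 0)%R])%E ->
  (* P(Y_1 >= x) <~ (log x)^(-a) as x -> oo, for some a > 1 *)
  (exists a : R, 1 < a /\ exists C : R,
     \forall x \near +oo, (P [set t | (x <= Y 1%N t)%R] <= (C * (ln x) `^ (- a))%:E)%E) ->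
  ({homo alpha : m n / (m <= n)%N >-> m <= n} ->
     exists c : R, 0 < c /\
       (0 < P (\bigcap_n [set t | (Xseq alpha rho Y n.+1 t <= - c * alpha n * rho ^+ n)%R]))%E)
  /\
  ((exists l u : R, 0 < l /\ forall n, l <= alpha n <= u) ->
     exists c : R, 0 < c /\
       (0 < P (\bigcap_n [set t | (Xseq alpha rho Y n.+1 t <= - c * rho ^+ n)%R]))%E).
Proof.
move=> apos rho1 hiid hneg htail.
have [del del0 hkey] := key rho1 hiid hneg htail.
have rho0 : 0 < rho by lra.
have incl : forall (eta W : R) (K : nat) (s : R) (n : nat), 0 <= s -> 0 <= W ->
  (forall n, \sum_(1 <= i < n) gf K (s / rho) i <= eta) ->
  (forall i, (i <= n)%N -> 0 <= alpha (n - i)%N <= W) ->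
  forall t, (\bigcap_i (Y i.+1 @^-1`
        `]-oo, (if i == 0%N then - del else if (K <= i)%N then s ^+ i else 0)%R])) t ->
  Xseq alpha rho Y n.+1 t <= rho ^+ n * alpha n * Y 1%N t + W * rho ^+ n * eta.
  move=> eta W K s n s0 W0 hg hW t ht.
  rewrite /Xseq; apply: det => //; last exact: ltW.
  case=> [|[|i]] // /andP[_ hi].
  rewrite subSS /=.
  apply: term_bound => //; first exact: hW.
  by have := ht i.+1 I; rewrite /= in_itv /=.
have mE : forall (K : nat) (s : R), measurable (\bigcap_i (Y i.+1 @^-1`
        `]-oo, (if i == 0%N then - del else if (K <= i)%N then s ^+ i else 0)%R])).
  move=> K s; apply: bigcapT_measurable => i.
  by apply: measurable_funPTI; exact: measurable_itv.
have hy1 : forall (K : nat) (s : R) t, (\bigcap_i (Y i.+1 @^-1`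
        `]-oo, (if i == 0%N then - del else if (K <= i)%N then s ^+ i else 0)%R])) t ->
        Y 1%N t <= - del.
  by move=> K s t ht; have := ht 0%N I; rewrite /= in_itv /=.
split.
- move=> hom.
  have [K [s [s0 hg hP]]] := hkey (del / 2) ltac:(lra).
  exists (del / 2); split; first lra.
  apply: (lt_le_trans hP); apply: le_measure; rewrite ?inE //.
    by apply: bigcapT_measurable => n; exact: meas_X.
  move=> t ht n _ /=.
  have hW : forall i, (i <= n)%N -> 0 <= alpha (n - i)%N <= alpha n.
    by move=> i _; rewrite ltW ?apos //= hom // leq_subr.
  have h1 := incl (del / 2) (alpha n) K s n s0 (ltW (apos n)) hg hW t ht.
  have h2 := hy1 K s t ht.
  have p0 : 0 <= rho ^+ n * alpha n by rewrite mulr_ge0 ?exprn_ge0 // ltW.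
  have h3 : rho ^+ n * alpha n * Y 1%N t <= rho ^+ n * alpha n * (- del).
    exact: ler_wpM2l.
  apply: (le_trans h1).
  move: h3; set x := rho ^+ n; set y := alpha n => h3.
  have -> : - (del / 2) * y * x = x * y * (- del) + y * x * (del / 2).
    by field.
  by rewrite lerD2r.
- move=> [l [u [l0 hlu]]].
  have lu : l <= u by have /andP[h1 h2] := hlu 0%N; exact: le_trans h1 h2.
  have u0 : 0 < u by exact: lt_le_trans l0 lu.
  have [K [s [s0 hg hP]]] := hkey (del * l / (2 * u)) ltac:(by rewrite divr_gt0 ?mulr_gt0).
  exists (del * l / 2); split; first by rewrite divr_gt0 ?mulr_gt0.
  apply: (lt_le_trans hP); apply: le_measure; rewrite ?inE //.
    by apply: bigcapT_measurable => n; exact: meas_X.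
  move=> t ht n _ /=.
  have hW : forall i, (i <= n)%N -> 0 <= alpha (n - i)%N <= u.
    by move=> i _; rewrite ltW ?apos //=; have /andP[] := hlu (n - i)%N.
  have h1 := incl _ u K s n s0 (ltW u0) hg hW t ht.
  have h2 := hy1 K s t ht.
  have pn : 0 < rho ^+ n by rewrite exprn_gt0.
  have hl : l <= alpha n by have /andP[] := hlu n.
  have h3 : rho ^+ n * alpha n * Y 1%N t <= rho ^+ n * l * (- del).
    apply: (le_trans (ler_wpM2l _ h2)); first by rewrite mulr_ge0 // ltW.
    rewrite !mulrN lerN2; apply: ler_wpM2r; first exact: ltW.
    by apply: ler_wpM2l => //; exact: ltW.
  apply: (le_trans h1).
  move: h3; set x := rho ^+ n => h3.
  have -> : u * x * (del * l / (2 * u)) = x * (del * l / 2).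
    by field; rewrite gt_eqF.
  have -> : - (del * l / 2) * x = x * l * (- del) + x * (del * l / 2).
    by field.
  by rewrite lerD2r.
Qed.
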